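(* Let $H=(S_1,\dots,S_\ell)$ be a partial route and $\xi\in[N]$. Then there exists an optimal solution $(\bar\alpha,\bar\beta)$ of the dual of the linear program $$\mathcal{L}^*_\xi(H)=\min\Big\{\sum_{v\in V_+(H)}w_vy_v:\ y(V_+(H'))\ge k_\xi(V_+(H'))-1\ (H'\subseteq H),\ y_v\le b_v\ (v\in V_+),\ y\ge0\Big\},$$ where $\bar\alpha_{H'}\ge0$ is the multiplier of the constraint for $H'$ and $\bar\beta_v\le0$ that of $y_v\le b_v$, such that $\sum_{H'\subseteq H}\bar\alpha_{H'}\le\mathcal{L}^*_\xi(H)$ and $\sum_{H'\subseteq H:\,v\in V_+(H')}\bar\alpha_{H'}+\bar\beta_v\le0$ for every $v\in V_+$ with $w_v=0$.
   Context: $G=(V,E)$ complete undirected graph with $V=\{0\}\cup V_+$ ($V_+$ customers); $D=(V,A)$ replaces each edge by two opposite arcs. Capacity $C>0$; scenario demands $d^\xi\in\mathbb{Q}^{V_+}_{\ge0}$ with $d^\xi(v)\le C$. $f(S)=\sum_{i\in S}f(i)$, $k_\xi(S)=\lceil d^\xi(S)/C\rceil$. Fixed $w\in\mathbb{Q}^{V_+}_{\ge0}$ and $b\in\mathbb{Z}^{V_+}_{\ge0}$ such that for every route $R=(v_1,\dots,v_m)$ (cycle $0,v_1,\dots,v_m,0$ through distinct customers, $v_0=v_{m+1}=0$) and every scenario $\xi$ there is an integer vector $y\in[0,b]$ for which there exist $f_{(v_{i-1},v_i)}\in[0,C]$ and $g_{v_i}\ge0$ with $f_{(v_{i-1},v_i)}+d^\xi(v_i)=f_{(v_i,v_{i+1})}+g_{v_i}$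 and $g_{v_i}\le Cy_{v_i}$ for all $i\in[m]$. A partial route $H=(S_1,\dots,S_\ell)$ is a tuple of pairwise disjoint nonempty subsets of $V_+$ with no index $i$ such that both $S_i$ and $S_{i+1}$ have more than one element; $V_+(H)=\bigcup_iS_i$; $H'\subseteq H$ means $H'=(S_i,\dots,S_j)$ with $1\le i\le j\le\ell$. *)

(* Defs.v *)
From HB Require Import structures.
From mathcomp Require Import all_boot all_order all_algebra.
Set Implicit Arguments. Unset Strict Implicit. Unset Printing Implicit Defensive.
Import Order.TTheory GRing.Theory Num.Theory.
Local Open Scope ring_scope.

(* Customers V_+ form a finite type T; the depot 0 is implicit.
   Scenarios are indexed by 'I_N; d xi v is the demand of customer v. *)

Definition dem (T : finType) (dxi : T -> rat) (S : {set T}) : rat :=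
  \sum_(v in S) dxi v.

Definition kcap (T : finType) (C : rat) (dxi : T -> rat) (S : {set T}) : int :=
  Num.ceil (dem dxi S / C).

(* A route (v_1,...,v_m) is a
   duplicate-free sequence r; f i (0 <= i <= m) is the flow on the arc
   (v_i, v_{i+1}) in 1-based numbering with v_0 = v_{m+1} = depot, i.e. f i is
   the flow on the arc entering the customer at 0-based position i of r
   (and f m is the arc back to the depot). *)
Definition route_feasible (T : finType) (C : rat) (dxi : T -> rat)
    (b : T -> nat) (r : seq T) : Prop :=
  exists y : T -> nat, (forall v, (y v <= b v)%N) /\
  exists (f : nat -> rat) (g : T -> rat),
    (forall i, (i <= size r)%N -> 0 <= f i <= C) /\
    (forall i : 'I_(size r),
       let v := tnth (in_tuple r) i in
       [/\ f i + dxi v = f i.+1 + g v, 0 <= g v & g v <= C * (y v)%:R]).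

Definition standing_wb (T : finType) (N : nat) (C : rat)
    (d : 'I_N -> T -> rat) (b : T -> nat) : Prop :=
  forall (xi : 'I_N) (r : seq T), uniq r -> route_feasible C (d xi) b r.

Definition partial_route (T : finType) (H : seq {set T}) : Prop :=
  (forall i j, (i < size H)%N -> (j < size H)%N -> i <> j ->
     [disjoint nth set0 H i & nth set0 H j]) /\
  (forall i, (i < size H)%N -> nth set0 H i != set0) /\
  (forall i, (i.+1 < size H)%N ->
     ~ ((1 < #|nth set0 H i|)%N /\ (1 < #|nth set0 H i.+1|)%N)).

Definition VH (T : finType) (H : seq {set T}) : {set T} :=
  \bigcup_(S <- H) S.

(* V_+(H') for H' = (S_i,...,S_j), 0 <= i <= j < l *)
Definition Vsub (T : finType) (H : seq {set T}) (i j : nat) : {set T} :=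
  \bigcup_(t < size H | (i <= t <= j)%N) nth set0 H t.

Definition primal_feas (T : finType) (C : rat) (dxi : T -> rat) (b : T -> nat)
    (H : seq {set T}) (y : T -> rat) : Prop :=
  (forall i j : 'I_(size H), (i <= j)%N ->
     \sum_(v in Vsub H i j) y v >= (kcap C dxi (Vsub H i j))%:~R - 1) /\
  (forall v, y v <= (b v)%:R) /\ (forall v, 0 <= y v).

Definition primal_obj (T : finType) (w : T -> rat) (H : seq {set T})
    (y : T -> rat) : rat :=
  \sum_(v in VH H) w v * y v.

Definition alpha_at (T : finType) (H : seq {set T})
    (alpha : 'I_(size H) -> 'I_(size H) -> rat) (v : T) : rat :=
  \sum_(i < size H) \sum_(j < size H | (i <= j)%N && (v \in Vsub H i j)) alpha i j.

Definition alpha_sum (T : finType) (H : seq {set T})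
    (alpha : 'I_(size H) -> 'I_(size H) -> rat) : rat :=
  \sum_(i < size H) \sum_(j < size H | (i <= j)%N) alpha i j.

(* The dual LP: alpha_{H'} >= 0, beta_v <= 0, and for every v in V_+
   sum_{H' ni v} alpha_{H'} + beta_v <= (objective coefficient of y_v),
   which is w_v for v in V_+(H) and 0 otherwise.  Entries alpha i j with
   i > j are not variables (they never occur). *)
Definition dual_feas (T : finType) (w : T -> rat) (H : seq {set T})
    (alpha : 'I_(size H) -> 'I_(size H) -> rat) (beta : T -> rat) : Prop :=
  (forall i j : 'I_(size H), (i <= j)%N -> 0 <= alpha i j) /\
  (forall v, beta v <= 0) /\
  (forall v, alpha_at alpha v + beta v <= (if v \in VH H then w v else 0)).

Definition dual_obj (T : finType) (C : rat) (dxi : T -> rat) (b : T -> nat)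
    (H : seq {set T}) (alpha : 'I_(size H) -> 'I_(size H) -> rat)
    (beta : T -> rat) : rat :=
  \sum_(i < size H) \sum_(j < size H | (i <= j)%N)
      alpha i j * ((kcap C dxi (Vsub H i j))%:~R - 1)
  + \sum_v beta v * (b v)%:R.

(* Main.v *)
Require Import Defs.
From HB Require Import structures.
From mathcomp Require Import all_boot all_order all_algebra.
From mathcomp Require Import ring lra.
Set Implicit Arguments. Unset Strict Implicit. Unset Printing Implicit Defensive.
Import Order.TTheory GRing.Theory Num.Theory.
Local Open Scope ring_scope.

Section Farkas.
Variable R : realFieldType.

Lemma sum_delta (I : finType) (p : I) (F : I -> R) :
  \sum_k (k == p)%:R * F k = F p.
Proof.
rewrite (bigD1 p) //= eqxx mul1r big1 ?addr0 // => k /negbTE ->; by rewrite mul0r.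
Qed.

Lemma sum_delta2 (I : finType) (p : I) (r : R) (F : I -> R) :
  \sum_k (k == p)%:R * r * F k = r * F p.
Proof. by rewrite -sum_delta mulr_sumr; apply: eq_bigr => k _; rewrite mulrCA mulrA. Qed.

Lemma interval_choice (I : finType) (P N : pred I) (L U : I -> R) :
  (forall p q, P p -> N q -> L q <= U p) ->
  exists t, (forall q, N q -> L q <= t) /\ (forall p, P p -> t <= U p).
Proof.
move=> h; case: (pickP N) => [q0 Nq0 | N0].
  case: (@arg_maxP _ R I q0 N L Nq0) => q Nq hq.
  exists (L q); split; first by move=> q' /hq.
  by move=> p Pp; apply: h.
case: (pickP P) => [p0 Pp0 | P0].
  case: (@arg_minP _ R I p0 P U Pp0) => p Pp hp.
  by exists (U p); split; [move=> q; rewrite N0 | move=> p' /hp].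
by exists 0; split=> x; rewrite ?N0 ?P0.
Qed.

Definition feasible (X I : finType) (a : I -> X -> R) (c : I -> R) :=
  exists x : X -> R, forall i, \sum_u a i u * x u <= c i.
Definition certificate (X I : finType) (a : I -> X -> R) (c : I -> R) :=
  exists lam : I -> R, [/\ forall i, 0 <= lam i,
     forall u, \sum_i lam i * a i u = 0 & \sum_i lam i * c i < 0].

Lemma farkas_base (X I : finType) (a : I -> X -> R) (c : I -> R) :
  (forall i u, a i u = 0) -> feasible a c \/ certificate a c.
Proof.
move=> a0; case: (pickP (fun i => c i < 0)) => [i ci | hc].
  right; exists (fun k => (k == i)%:R); split.
  - by move=> k; rewrite ler0n.
  - by move=> u; rewrite big1 // => k _; rewrite a0 mulr0.
  - by rewrite sum_delta.
left; exists (fun _ => 0) => i; rewrite big1 ?(fun u => mulr0 _) //.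
  by move: (hc i) => /negbT; rewrite -leNgt.
by move=> u _; rewrite mulr0.
Qed.


Section Step.
Variables (X I : finType) (a : I -> X -> R) (c : I -> R) (x0 : X).

Definition mw (i' : I + (I * I)) (k : I) : R :=
  match i' with
  | inl i => if a i x0 == 0 then (k == i)%:R else 0
  | inr (p, q) => if (0 < a p x0) && (a q x0 < 0)
                  then (k == p)%:R * (- a q x0) + (k == q)%:R * a p x0 else 0
  end.

Lemma mw_ge0 i' k : 0 <= mw i' k.
Proof.
case: i' => [i|[p q]] /=; first by case: ifP; rewrite ?ler0n.
case: ifP => // /andP[hp hq].
by apply: addr_ge0; apply: mulr_ge0; rewrite ?ler0n // ?oppr_ge0 ltW.
Qed.

Lemma sum_mw_inl i (F : I -> R) :
  \sum_k mw (inl i) k * F k = if a i x0 == 0 then F i else 0.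
Proof.
rewrite /=; case: ifP => _; first by rewrite sum_delta.
by rewrite big1 // => k _; rewrite mul0r.
Qed.

Lemma sum_mw_inr p q (F : I -> R) :
  \sum_k mw (inr (p, q)) k * F k =
  if (0 < a p x0) && (a q x0 < 0) then - a q x0 * F p + a p x0 * F q else 0.
Proof.
rewrite /=; case: ifP => _; last by rewrite big1 // => k _; rewrite mul0r.
under eq_bigr => k _ do rewrite mulrDl.
by rewrite big_split /= !sum_delta2.
Qed.

Lemma sum_mw_x0 i' : \sum_k mw i' k * a k x0 = 0.
Proof.
case: i' => [i|[p q]]; first by rewrite sum_mw_inl; case: ifP => // /eqP.
by rewrite sum_mw_inr; case: ifP => // _; rewrite mulrC mulrN addrC subrr.
Qed.

Definition a' i' u := \sum_k mw i' k * a k u.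
Definition c' i' := \sum_k mw i' k * c k.

Lemma step_cert : certificate a' c' -> certificate a c.
Proof.
case=> lam' [h0 h1 h2].
exists (fun k => \sum_i' lam' i' * mw i' k); split.
- by move=> k; apply: sumr_ge0 => i' _; apply: mulr_ge0 => //; apply: mw_ge0.
- move=> u; rewrite -[RHS](h1 u).
  under eq_bigr => k _ do rewrite mulr_suml.
  rewrite exchange_big /=; apply: eq_bigr => i' _.
  by rewrite /a' mulr_sumr; apply: eq_bigr => k _; rewrite mulrA.
- rewrite (le_lt_trans _ h2) // le_eqVlt; apply/orP; left; apply/eqP.
  under eq_bigr => k _ do rewrite mulr_suml.
  rewrite exchange_big /=; apply: eq_bigr => i' _.
  by rewrite /c' mulr_sumr; apply: eq_bigr => k _; rewrite mulrA.
Qed.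

Lemma step_feas : feasible a' c' -> feasible a c.
Proof.
case=> x hx.
pose z u := if u == x0 then 0 else x u.
pose s k := \sum_u a k u * z u.
have hz i' : \sum_u a' i' u * x u = \sum_k mw i' k * s k.
  transitivity (\sum_u a' i' u * z u).
    apply: eq_bigr => u _; rewrite /z; case: eqP => [->|//].
    by rewrite /a' sum_mw_x0 !mul0r.
  rewrite /s /a'; under eq_bigr => u _ do rewrite mulr_suml.
  rewrite exchange_big /=; apply: eq_bigr => k _.
  by rewrite mulr_sumr; apply: eq_bigr => u _; rewrite mulrA.
pose P k := 0 < a k x0.
pose N k := a k x0 < 0.
pose U k := (c k - s k) / a k x0.
have [t [ht1 ht2]] : exists t, (forall q, N q -> U q <= t) /\ (forall p, P p -> t <= U p).
  apply: interval_choice => p q Pp Nq.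
  rewrite /P /N in Pp Nq.
  have := hx (inr (p, q)); rewrite hz /c' !sum_mw_inr Pp Nq /= => hpq.
  rewrite /U ler_pdivlMr //.
  set e := (c q - s q) / a q x0.
  have he : c q - s q = e * a q x0 by rewrite /e divfK // ltr0_neq0.
  nra.
exists (fun u => z u + (u == x0)%:R * t) => i.
have -> : \sum_u a i u * (z u + (u == x0)%:R * t) = s i + t * a i x0.
  under eq_bigr => u _ do rewrite mulrDr [a i u * (_ * t)]mulrC.
  by rewrite big_split /= sum_delta2.
have [hN|hP|h0] := ltgtP (a i x0) 0.
- have := ht1 i hN; rewrite /U ler_ndivrMr //; lra.
- have := ht2 i hP; rewrite /U ler_pdivlMr //; lra.
- have := hx (inl i); rewrite hz /c' !sum_mw_inl h0 eqxx mulr0 addr0 //.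
Qed.

End Step.

Lemma farkas_gen n : forall (X I : finType) (a : I -> X -> R) (c : I -> R) (A : {set X}),
  (#|A| <= n)%N -> (forall i u, u \notin A -> a i u = 0) ->
  feasible a c \/ certificate a c.
Proof.
elim: n => [|n IH] X I a c A hA hz.
  apply: farkas_base => i u; apply: hz.
  by move: hA; rewrite leqn0 cards_eq0 => /eqP ->; rewrite inE.
case: (set_0Vmem A) => [A0|[x0 x0A]].
  by apply: farkas_base => i u; apply: hz; rewrite A0 inE.
have h1 : (#|A :\ x0| <= n)%N.
  by move: hA; rewrite (cardsD1 x0 A) x0A.
have h2 : forall i' u, u \notin A :\ x0 -> a' a x0 i' u = 0.
  move=> i' u; rewrite !inE negb_and negbK => /orP[/eqP->|uA].
    exact: sum_mw_x0.
  by rewrite /a' big1 // => k _; rewrite hz // mulr0.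
have [h|h] := IH X _ (a' a x0) (c' a c x0) (A :\ x0) h1 h2.
- by left; apply: step_feas h.
- by right; apply: step_cert h.
Qed.

Lemma farkas (X I : finType) (a : I -> X -> R) (c : I -> R) :
  feasible a c \/ certificate a c.
Proof.
apply: (@farkas_gen #|[set: X]| X I a c [set: X]) => // i u.
by rewrite inE.
Qed.


Lemma sum_delta_r (I : finType) (p : I) (F : I -> R) :
  \sum_k F k * (p == k)%:R = F p.
Proof.
by rewrite -sum_delta; apply: eq_bigr => k _; rewrite mulrC eq_sym.
Qed.

Lemma farkas_nn (X I : finType) (a : I -> X -> R) (c : I -> R) :
  (exists x : X -> R, (forall u, 0 <= x u) /\ forall i, \sum_u a i u * x u <= c i) \/
  (exists lam : I -> R, [/\ forall i, 0 <= lam i,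
     forall u, 0 <= \sum_i lam i * a i u & \sum_i lam i * c i < 0]).
Proof.
pose a2 (i : I + X) u := match i with inl i => a i u | inr v => - (u == v)%:R end.
pose c2 (i : I + X) := match i with inl i => c i | inr v => 0 end.
have [[x hx]|[lam [h0 h1 h2]]] := farkas a2 c2.
- left; exists x; split; last by move=> i; exact: (hx (inl i)).
  move=> u; have := hx (inr u); rewrite /a2 /c2.
  under eq_bigr => k _ do rewrite mulNr.
  by rewrite sumrN sum_delta oppr_le0.
- right; exists (fun i => lam (inl i)); split => //.
  + move=> u; have := h1 u; rewrite big_sumType /=.
    under [X in _ + X]eq_bigr => k _ do rewrite mulrN.
    by rewrite sumrN sum_delta_r => /eqP; rewrite subr_eq0 => /eqP ->.
  + by move: h2; rewrite big_sumType /= [X in _ + X]big1 ?addr0 // => k _; rewrite mulr0.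
Qed.

End Farkas.
Lemma standing_bound (T : finType) (C : rat) (dxi : T -> rat) (b : T -> nat)
  (hC : 0 < C) (hr : forall r : seq T, uniq r -> route_feasible C dxi b r)
  (S : {set T}) :
  ((kcap C dxi S)%:~R - 1 : rat) <= \sum_(v in S) (b v)%:R.
Proof.
have [y [hyb [f [g [hf hfg]]]]] := hr (enum S) (enum_uniq _).
set r := enum S in hf hfg.
have hsum (F : T -> rat) : \sum_(i < size r) F (tnth (in_tuple r) i) = \sum_(v in S) F v.
  transitivity (\sum_(v <- r) F v); first by rewrite [RHS]big_tnth.
  by rewrite /r big_enum.
have hd : dem dxi S = f (size r) - f 0%N + \sum_(v in S) g v.
  rewrite /dem -!hsum -(telescope_sumr _ (leq0n (size r))) big_mkord -big_split /=.
  apply: eq_bigr => i _; have [e _ _] := hfg i.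
  by rewrite /= in e; lra.
have hg : \sum_(v in S) g v <= C * \sum_(v in S) (b v)%:R.
  rewrite mulr_sumr -!hsum; apply: ler_sum => i _.
  have [_ _ e] := hfg i; apply: (le_trans e); rewrite ler_pM2l // ler_nat; exact: hyb.
have zn (m : nat) : (m%:Z)%:~R = m%:R :> rat by rewrite -pmulrn.
have := hf 0%N (leq0n _); have := hf (size r) (leqnn _) => /andP[h1 h2] /andP[h3 h4].
have hk : dem dxi S / C <= ((\sum_(v in S) b v)%N%:Z + 1)%:~R.
  rewrite ler_pdivrMr // rmorphD /= zn natr_sum mulrDl mul1r mulrC.
  lra.
rewrite /kcap.
have := hk; rewrite -ceil_le_int -(ler_int rat) rmorphD /= => h.
rewrite zn natr_sum in h; lra.
Qed.

Lemma clip (T : finType) (S : {set T}) (r : int) (lam kap : rat) (z : T -> rat)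
  (bn : T -> nat) :
  0 <= kap -> kap < lam -> (forall v, 0 <= z v) -> (forall v, z v <= lam * (bn v)%:R) ->
  lam * r%:~R - kap <= \sum_(v in S) z v ->
  r%:~R <= \sum_(v in S) Num.min (z v / (lam - kap)) (bn v)%:R.
Proof.
move=> hk hkl hz hzb hS.
have ht : 0 < lam - kap by rewrite subr_gt0.
pose P v := (bn v)%:R <= z v / (lam - kap).
rewrite (bigID P) /=.
have -> : \sum_(v in S | P v) Num.min (z v / (lam - kap)) (bn v)%:R =
          (\sum_(v in S | P v) bn v)%N%:R.
  by rewrite natr_sum; apply: eq_bigr => v /andP[_ Pv]; rewrite /Num.min ltNge; move: Pv; rewrite /P => ->.
have -> : \sum_(v in S | ~~ P v) Num.min (z v / (lam - kap)) (bn v)%:R =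
          (\sum_(v in S | ~~ P v) z v) / (lam - kap).
  rewrite mulr_suml; apply: eq_bigr => v /andP[_ Pv]; rewrite /Num.min.
  by move: Pv; rewrite /P -ltNge => ->.
set B := (\sum_(v in S | P v) bn v)%N.
have hQ : \sum_(v in S) z v = \sum_(v in S | P v) z v + \sum_(v in S | ~~ P v) z v.
  by rewrite (bigID P).
have hB : \sum_(v in S | P v) z v <= lam * B%:R.
  rewrite /B natr_sum mulr_sumr; apply: ler_sum => v _; exact: hzb.
set Q := \sum_(v in S | ~~ P v) z v.
have hQ0 : 0 <= Q by apply: sumr_ge0.
have [hrB|hrB] := leP r B%:Z.
  have : r%:~R <= B%:R :> rat.
    by rewrite -(ler_int rat) in hrB; move: hrB; rewrite -pmulrn.
  have : 0 <= Q / (lam - kap) by apply: divr_ge0 => //; exact: ltW.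
  lra.
have hr1 : B%:R + 1 <= r%:~R :> rat.
  have : (B%:Z + 1 <= r)%R by rewrite lezD1.
  by rewrite -(ler_int rat) rmorphD /= -pmulrn.
have : (r%:~R - B%:R) * (lam - kap) <= Q.
  have hkr : 0 <= kap * (r%:~R - B%:R - 1) by apply: mulr_ge0 => //; lra.
  have hS2 : lam * r%:~R - kap <= \sum_(v in S | P v) z v + Q by rewrite /Q -hQ.
  nra.
rewrite -ler_pdivlMr //; lra.
Qed.
Section Main.
Variables (T : finType) (C : rat) (dxi : T -> rat) (b : T -> nat) (w : T -> rat)
  (H : seq {set T}).
Local Notation n := (size H).
Definition PT := ('I_n * 'I_n)%type.
Definition rr (p : PT) : rat :=
  if (p.1 <= p.2)%N then (kcap C dxi (Vsub H p.1 p.2))%:~R - 1 else 0.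
Definition inV (p : PT) (v : T) : bool := (p.1 <= p.2)%N && (v \in Vsub H p.1 p.2).
Definition wq (v : T) : rat := if v \in VH H then w v else 0.
Definition XT := ((T + T) + PT)%type.
Definition IT := ((PT + T) + (T + bool))%type.

Definition coef (i : IT) (u : XT) : rat :=
  match i with
  | inl (inl p) => match u with inl (inl v) => - (inV p v)%:R | _ => 0 end
  | inl (inr v') => match u with inl (inl v) => (v == v')%:R | _ => 0 end
  | inr (inl v') => match u with
                    | inr p => (inV p v')%:R
                    | inl (inr v) => - (v == v')%:R
                    | _ => 0 end
  | inr (inr true) => match u with
                      | inl (inl v) => wq v
                      | inl (inr v) => (b v)%:R
                      | inr p => - rr p end
  | inr (inr false) => match u with
                       | inl (inl v) => - wq v
                       | inr p => ((p.1 <= p.2)%N)%:R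
                       | _ => 0 end
  end.

Definition rhs (i : IT) : rat :=
  match i with
  | inl (inl p) => - rr p
  | inl (inr v) => (b v)%:R
  | inr (inl v) => wq v
  | inr (inr _) => 0
  end.

Lemma sumX (F : XT -> rat) :
  \sum_u F u = \sum_v F (inl (inl v)) + \sum_v F (inl (inr v)) + \sum_p F (inr p).
Proof. by rewrite !big_sumType. Qed.

Lemma sumI (F : IT -> rat) :
  \sum_i F i = \sum_p F (inl (inl p)) + \sum_v F (inl (inr v)) +
     (\sum_v F (inr (inl v)) + (F (inr (inr true)) + F (inr (inr false)))).
Proof. by rewrite !big_sumType big_bool. Qed.

Lemma z0l (J : finType) (G : J -> rat) : \sum_j 0 * G j = 0.
Proof. by rewrite big1 // => j _; rewrite mul0r. Qed.
Lemma z0r (J : finType) (G : J -> rat) : \sum_j G j * 0 = 0.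
Proof. by rewrite big1 // => j _; rewrite mulr0. Qed.

Lemma sum_inV p (Y : T -> rat) :
  \sum_v (inV p v)%:R * Y v =
  if (p.1 <= p.2)%N then \sum_(v in Vsub H p.1 p.2) Y v else 0.
Proof.
rewrite /inV; case: leqP => h /=.
  by rewrite [RHS]big_mkcond; apply: eq_bigr => v _; case: (v \in _); rewrite ?mul1r ?mul0r.
by rewrite z0l.
Qed.

Lemma sum_pairs (F : 'I_n -> 'I_n -> rat) (Q : 'I_n -> 'I_n -> bool) :
  \sum_i \sum_(j | Q i j) F i j = \sum_(p : PT) if Q p.1 p.2 then F p.1 p.2 else 0.
Proof.
under eq_bigr => i _ do rewrite big_mkcond.
by rewrite pair_big.
Qed.

Lemma alpha_atE (alpha : 'I_n -> 'I_n -> rat) v :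
  alpha_at alpha v = \sum_(p : PT) (inV p v)%:R * alpha p.1 p.2.
Proof.
rewrite /alpha_at sum_pairs; apply: eq_bigr => p _.
by rewrite /inV; case: (_ && _); rewrite ?mul1r ?mul0r.
Qed.

Lemma alpha_sumE (alpha : 'I_n -> 'I_n -> rat) :
  alpha_sum alpha = \sum_(p : PT) ((p.1 <= p.2)%N)%:R * alpha p.1 p.2.
Proof.
rewrite /alpha_sum sum_pairs; apply: eq_bigr => p _.
by case: (_ <= _)%N; rewrite ?mul1r ?mul0r.
Qed.

Lemma dual_objE (alpha : 'I_n -> 'I_n -> rat) beta :
  dual_obj C dxi b alpha beta =
  \sum_(p : PT) rr p * alpha p.1 p.2 + \sum_v beta v * (b v)%:R.
Proof.
rewrite /dual_obj sum_pairs; congr (_ + _); apply: eq_bigr => p _.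
by rewrite /rr; case: (_ <= _)%N; [rewrite mulrC | rewrite mul0r].
Qed.

Lemma primal_objE (y : T -> rat) : primal_obj w H y = \sum_v wq v * y v.
Proof.
rewrite /primal_obj big_mkcond; apply: eq_bigr => v _.
by rewrite /wq; case: (_ \in _); rewrite ?mul0r.
Qed.

Lemma weak_dual (y : T -> rat) (alpha : 'I_n -> 'I_n -> rat) (beta : T -> rat) :
  primal_feas C dxi b H y -> dual_feas w alpha beta ->
  dual_obj C dxi b alpha beta <= primal_obj w H y.
Proof.
move=> [hp [hb h0]] [ha [hbe hd]].
rewrite dual_objE primal_objE.
have e1 : \sum_(p : PT) rr p * alpha p.1 p.2 <=
          \sum_v y v * \sum_(p : PT) (inV p v)%:R * alpha p.1 p.2.
  under [X in _ <= X]eq_bigr => v _ do rewrite mulr_sumr.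
  rewrite exchange_big /=; apply: ler_sum => -[i j] _ /=.
  have -> : \sum_v y v * ((inV (i, j) v)%:R * alpha i j) =
            alpha i j * \sum_v (inV (i, j) v)%:R * y v.
    by rewrite mulr_sumr; apply: eq_bigr => v _; ring.
  rewrite sum_inV /rr /=; case: leqP => hij.
    by rewrite mulrC; apply: ler_wpM2l; [exact: ha | exact: hp].
  by rewrite !mul0r mulr0.
have e2 : \sum_v beta v * (b v)%:R <= \sum_v beta v * y v.
  by apply: ler_sum => v _; apply: ler_wnM2l; [exact: hbe | exact: hb].
have e3 : \sum_v y v * \sum_(p : PT) (inV p v)%:R * alpha p.1 p.2 + \sum_v beta v * y v
          <= \sum_v wq v * y v.
  rewrite -big_split /=; apply: ler_sum => v _.
  have := hd v; rewrite -alpha_atE /wq => h.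
  have := h0 v; nra.
lra.
Qed.


Lemma sum_delta' (I : finType) (p : I) (F : I -> rat) :
  \sum_k (k == p)%:R * F k = F p.
Proof.
rewrite (bigD1 p) //= eqxx mul1r big1 ?addr0 // => k /negbTE ->; by rewrite mul0r.
Qed.
Lemma sum_delta_r' (I : finType) (p : I) (F : I -> rat) :
  \sum_k F k * (p == k)%:R = F p.
Proof. by rewrite -(sum_delta' p); apply: eq_bigr => k _; rewrite mulrC eq_sym. Qed.

Lemma row_P1 p (x : XT -> rat) : \sum_u coef (inl (inl p)) u * x u =
  - \sum_v (inV p v)%:R * x (inl (inl v)).
Proof.
rewrite sumX /= !z0l !addr0 -sumrN; apply: eq_bigr => v _; by rewrite mulNr.
Qed.

Lemma row_P2 v (x : XT -> rat) : \sum_u coef (inl (inr v)) u * x u = x (inl (inl v)).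
Proof. by rewrite sumX /= !z0l !addr0 sum_delta'. Qed.

Lemma row_D3 v (x : XT -> rat) : \sum_u coef (inr (inl v)) u * x u =
  \sum_(p : PT) (inV p v)%:R * x (inr p) - x (inl (inr v)).
Proof.
rewrite sumX /= !z0l add0r addrC.
under [X in _ + X]eq_bigr => k _ do rewrite mulNr.
by rewrite sumrN sum_delta'.
Qed.

Lemma row_O1 (x : XT -> rat) : \sum_u coef (inr (inr true)) u * x u =
  \sum_v wq v * x (inl (inl v)) + \sum_v (b v)%:R * x (inl (inr v))
  - \sum_(p : PT) rr p * x (inr p).
Proof.
rewrite sumX /= -sumrN; congr (_ + _); apply: eq_bigr => p _; by rewrite mulNr.
Qed.

Lemma row_O2 (x : XT -> rat) : \sum_u coef (inr (inr false)) u * x u =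
  - \sum_v wq v * x (inl (inl v)) + \sum_(p : PT) ((p.1 <= p.2)%N)%:R * x (inr p).
Proof.
rewrite sumX /= !z0l addr0 -sumrN; congr (_ + _); apply: eq_bigr => p _; by rewrite mulNr.
Qed.

Lemma col_y v (lam : IT -> rat) : \sum_i lam i * coef i (inl (inl v)) =
  - \sum_(p : PT) lam (inl (inl p)) * (inV p v)%:R + lam (inl (inr v)) +
  (lam (inr (inr true)) - lam (inr (inr false))) * wq v.
Proof.
rewrite sumI /= z0r sum_delta_r' add0r -sumrN.
under eq_bigr => k _ do rewrite mulrN.
ring.
Qed.

Lemma col_a p (lam : IT -> rat) : \sum_i lam i * coef i (inr p) =
  \sum_v lam (inr (inl v)) * (inV p v)%:R - lam (inr (inr true)) * rr p
  + lam (inr (inr false)) * ((p.1 <= p.2)%N)%:R.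
Proof. rewrite sumI /= !z0r !add0r; ring. Qed.

Lemma col_g v (lam : IT -> rat) : \sum_i lam i * coef i (inl (inr v)) =
  - lam (inr (inl v)) + lam (inr (inr true)) * (b v)%:R.
Proof.
rewrite sumI /= !z0r !add0r mulr0 addr0.
under eq_bigr => k _ do rewrite mulrN.
by rewrite sumrN sum_delta_r'.
Qed.

Lemma rhs_sum (lam : IT -> rat) : \sum_i lam i * rhs i =
  - \sum_(p : PT) lam (inl (inl p)) * rr p + \sum_v lam (inl (inr v)) * (b v)%:R
  + \sum_v lam (inr (inl v)) * wq v.
Proof.
rewrite sumI /= !mulr0 !addr0 -sumrN.
by under [X in X + _ + _ = _]eq_bigr => k _ do rewrite mulrN.
Qed.

End Main.

Unset Implicit Arguments.
Unset Strict Implicit.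

Theorem lemma8 (T : finType) (N : nat) (C : rat) (d : 'I_N -> T -> rat)
    (w : T -> rat) (b : T -> nat)
    (hC : 0 < C)
    (hd0 : forall xi v, 0 <= d xi v)
    (hdC : forall xi v, d xi v <= C)
    (hw : forall v, 0 <= w v)
    (hwb : standing_wb C d b)
    (H : seq {set T}) (hH : partial_route H) (xi : 'I_N) :
  exists y : T -> rat,
    [/\ primal_feas C (d xi) b H y,
        (forall y', primal_feas C (d xi) b H y' ->
           primal_obj w H y <= primal_obj w H y') &
    exists (alpha : 'I_(size H) -> 'I_(size H) -> rat) (beta : T -> rat),
      [/\ dual_feas w alpha beta,
          (forall (alpha' : 'I_(size H) -> 'I_(size H) -> rat) (beta' : T -> rat), dual_feas w alpha' beta' ->
             dual_obj C (d xi) b alpha' beta' <= dual_obj C (d xi) b alpha beta),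
          alpha_sum alpha <= primal_obj w H y &
          (forall v, w v = 0 -> alpha_at alpha v + beta v <= 0)]].
Proof.
set dxi := d xi.
have hst : forall S : {set T}, ((kcap C dxi S)%:~R - 1 : rat) <= \sum_(v in S) (b v)%:R.
  by move=> S; apply: standing_bound => // r ur; apply: hwb.
have hwq : forall v, 0 <= wq w H v by move=> v; rewrite /wq; case: ifP.
have [[x [hx0 hx]]|[lam [hl0 hl1 hl2]]] :=
  farkas_nn (@coef _ C dxi b w H) (@rhs _ C dxi b w H).
-
  pose y v := x (inl (inl v)).
  pose g v := x (inl (inr v)).
  pose alpha (i j : 'I_(size H)) := x (inr (i, j)).
  pose beta v := - g v.
  have hP1 (p : PT H) : rr C dxi p <= \sum_v (inV p v)%:R * y v.
    by have := hx (inl (inl p)); rewrite row_P1 /= lerN2.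
  have hP2 v : y v <= (b v)%:R by have := hx (inl (inr v)); rewrite row_P2.
  have hD3 v : alpha_at alpha v + beta v <= wq w H v.
    have := hx (inr (inl v)); rewrite row_D3 alpha_atE.
    have -> : \sum_(p : PT H) (inV p v)%:R * x (inr p) =
              \sum_(p : PT H) (inV p v)%:R * alpha p.1 p.2 by apply: eq_bigr => -[i j].
    by [].
  have hO1 : primal_obj w H y <= dual_obj C dxi b alpha beta.
    have := hx (inr (inr true)); rewrite row_O1 /= primal_objE dual_objE.
    have -> : \sum_(p : PT H) rr C dxi p * x (inr p) =
              \sum_(p : PT H) rr C dxi p * alpha p.1 p.2 by apply: eq_bigr => -[i j].
    have -> : \sum_v beta v * (b v)%:R = - \sum_v (b v)%:R * x (inl (inr v)).
      by rewrite -sumrN; apply: eq_bigr => v _; rewrite /beta /g mulNr mulrC.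
    rewrite /y; lra.
  have hO2 : alpha_sum alpha <= primal_obj w H y.
    have := hx (inr (inr false)); rewrite row_O2 /= primal_objE alpha_sumE.
    have -> : \sum_(p : PT H) ((p.1 <= p.2)%N)%:R * x (inr p) =
              \sum_(p : PT H) ((p.1 <= p.2)%N)%:R * alpha p.1 p.2 by apply: eq_bigr => -[i j].
    rewrite /y; lra.
  have hpf : primal_feas C dxi b H y.
    split; last split.
    + move=> i j hij; have := hP1 (i, j); rewrite sum_inV /rr /= hij //.
    + exact: hP2.
    + by move=> v; exact: hx0.
  have hdf : dual_feas w alpha beta.
    split; last split.
    + by move=> i j _; exact: hx0.
    + by move=> v; rewrite /beta oppr_le0; exact: hx0.
    + exact: hD3.
  exists y; split => //.
    move=> y' hy'; apply: (le_trans hO1); exact: weak_dual.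
  exists alpha, beta; split => //.
  + move=> a' b' hd'; apply: (le_trans (weak_dual hpf hd')) => //.
  + move=> v wv0; apply: (le_trans (hD3 v)); rewrite /wq wv0; by case: ifP.
-
  exfalso.
  pose pp (p : PT H) := lam (inl (inl p)).
  pose q v := lam (inl (inr v)).
  pose z v := lam (inr (inl v)).
  pose la := lam (inr (inr true)).
  pose ka := lam (inr (inr false)).
  have hy v : \sum_(p : PT H) pp p * (inV p v)%:R - q v <= (la - ka) * wq w H v.
    have := hl1 (inl (inl v)); rewrite col_y /pp /q /la /ka; lra.
  have ha (p : PT H) : (p.1 <= p.2)%N ->
      la * rr C dxi p - ka <= \sum_v z v * (inV p v)%:R.
    move=> hp; have := hl1 (inr p); rewrite col_a hp /z /la /ka; rewrite (_ : (true%:R : rat) = 1) // mulr1; lra.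
  have hg v : z v <= la * (b v)%:R.
    have := hl1 (inl (inr v)); rewrite col_g /z /la; lra.
  have hr : \sum_v z v * wq w H v <
            \sum_(p : PT H) pp p * rr C dxi p - \sum_v q v * (b v)%:R.
    move: hl2; rewrite rhs_sum /pp /q /z; lra.
  have hz0 v : 0 <= z v by exact: hl0.
  have hka : 0 <= ka by exact: hl0.
  have key (Y : T -> rat) : (forall v, 0 <= Y v) -> (forall v, Y v <= (b v)%:R) ->
      (forall p : PT H, rr C dxi p <= \sum_v (inV p v)%:R * Y v) ->
      \sum_(p : PT H) pp p * rr C dxi p - \sum_v q v * (b v)%:R <=
      (la - ka) * \sum_v wq w H v * Y v.
    move=> hY0 hYb hYr.
    have e1 : \sum_(p : PT H) pp p * rr C dxi p <=
              \sum_v Y v * \sum_(p : PT H) pp p * (inV p v)%:R.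
      under [X in _ <= X]eq_bigr => v _ do rewrite mulr_sumr.
      rewrite exchange_big /=; apply: ler_sum => p _.
      have -> : \sum_v Y v * (pp p * (inV p v)%:R) = pp p * \sum_v (inV p v)%:R * Y v.
        by rewrite mulr_sumr; apply: eq_bigr => v _; ring.
      by apply: ler_wpM2l; [exact: hl0 | exact: hYr].
    have e2 : \sum_v q v * Y v <= \sum_v q v * (b v)%:R.
      by apply: ler_sum => v _; apply: ler_wpM2l; [exact: hl0 | exact: hYb].
    have e3 : \sum_v Y v * \sum_(p : PT H) pp p * (inV p v)%:R - \sum_v q v * Y v <=
              (la - ka) * \sum_v wq w H v * Y v.
      rewrite -sumrB mulr_sumr; apply: ler_sum => v _.
      have := hy v; have := hY0 v; nra.
    lra.
  have hzw : 0 <= \sum_v z v * wq w H v.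
    by apply: sumr_ge0 => v _; apply: mulr_ge0.
  case: (lerP (la - ka) 0) => ht.
  + have hbw : 0 <= \sum_v wq w H v * (b v)%:R.
      by apply: sumr_ge0 => v _; apply: mulr_ge0.
    have hb : forall p : PT H, rr C dxi p <= \sum_v (inV p v)%:R * (b v)%:R.
      move=> p; rewrite sum_inV /rr; case: leqP => _ //; exact: hst.
    have := key (fun v => (b v)%:R) (fun v => ler0n _ _) (fun v => lexx _) hb.
    nra.
  + pose Y v := Num.min (z v / (la - ka)) (b v)%:R.
    have hzt v : z v = (la - ka) * (z v / (la - ka)).
      by rewrite mulrC divfK // gt_eqF.
    have hY0 v : 0 <= Y v.
      rewrite /Y /Num.min; case: ifP => _ //.
      by apply: divr_ge0 => //; exact: ltW.
    have hYb v : Y v <= (b v)%:R.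
      by rewrite /Y /Num.min; case: ifP => h //; exact: ltW.
    have hYz v : (la - ka) * Y v <= z v.
      rewrite /Y /Num.min; case: ifP => h; first by rewrite -hzt.
      have := negbT h; rewrite -leNgt => h'.
      have := hzt v; nra.
    have hYr (p : PT H) : rr C dxi p <= \sum_v (inV p v)%:R * Y v.
      rewrite sum_inV /rr; case: leqP => hp //.
      have hkl : ka < la by rewrite -subr_gt0.
      have hs : la * (kcap C dxi (Vsub H p.1 p.2) - 1)%:~R - ka <=
                \sum_(v in Vsub H p.1 p.2) z v.
        have := ha p hp; rewrite /rr hp rmorphB /=.
        have -> : \sum_v z v * (inV p v)%:R = \sum_v (inV p v)%:R * z v.
          by apply: eq_bigr => v _; rewrite mulrC.
        by rewrite sum_inV hp.
      have := clip hka hkl hz0 hg hs.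
      by rewrite rmorphB.
    have := key Y hY0 hYb hYr.
    have : (la - ka) * \sum_v wq w H v * Y v <= \sum_v z v * wq w H v.
      rewrite mulr_sumr; apply: ler_sum => v _.
      have := hYz v; have := hwq v; nra.
    lra.
Qed.
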